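(* For every $n\in\mathbb{N}$ and every $k\in\{0,1,\dots,n\}$, $|B_{n,k}|=(n+1)^{n-1}$.
   Context: For $n\in\mathbb{N}$ let $[n]=\{1,\dots,n\}$ and $PP_n=[n]^n$. Given $\alpha=(a_1,\dots,a_n)\in PP_n$ and an integer $k\ge0$, park cars $c_1,\dots,c_n$ in order on a street whose spots are indexed by all integers, initially all empty, with the unrestricted $k$-Naples rule: car $c_i$ parks at $a_i$ if empty; otherwise it checks spots $a_i-1,a_i-2,\dots,a_i-k$ in this order (including spots numbered $\le 0$) and parks in the first empty one; if all are occupied it drives east and parks in the first empty spot numbered greater than $a_i$. The set $B_{n,k}$ of contained parking functions consists of those $\alpha\in PP_n$ for which, under this process, every car parks in a spot belonging to $[n]$ (equivalently: all cars park in spots $1,\dots,n$ and no car ever occupies spot $0$ or any spot outside $[n]$). *)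

(* Defs.v *)
From HB Require Import structures.
From mathcomp Require Import all_boot all_order all_algebra.
Set Implicit Arguments. Unset Strict Implicit. Unset Printing Implicit Defensive.
Import Order.TTheory GRing.Theory Num.Theory.
Local Open Scope ring_scope.

Fixpoint first_free_from (S : seq int) (fuel : nat) (b : int) : int :=
  match fuel with
  | 0%N => b
  | m.+1 => if b \in S then first_free_from S m (b + 1) else b
  end.

(* first empty spot numbered strictly greater than a; among the size S + 1
   consecutive spots a+1, ..., a+size S+1 at least one is empty *)
Definition next_free (S : seq int) (a : int) : int :=
  first_free_from S (size S).+1 (a + 1).

Definition back_free (k : nat) (S : seq int) (a : int) : option int :=
  let js := iota 1 k in
  let i := find (fun j : nat => (a - j%:Z) \notin S) js in
  if (i < k)%N then Some (a - (nth 0%N js i)%:Z) else None.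

Definition park_spot (k : nat) (S : seq int) (a : int) : int :=
  if a \notin S then a else
  match back_free k S a with
  | Some b => b
  | None => next_free S a
  end.

Fixpoint park_aux (k : nat) (S : seq int) (prefs : seq int) : seq int :=
  match prefs with
  | [::] => [::]
  | a :: p => let b := park_spot k S a in b :: park_aux k (b :: S) p
  end.

Definition parking (k : nat) (prefs : seq int) : seq int := park_aux k [::] prefs.

Definition contained (n k : nat) (prefs : seq int) : bool :=
  all (fun b : int => (0 < b) && (b <= n%:Z)) (parking k prefs).

(* B_{n,k}: preference lists in PP_n = [n]^n, encoded as n-tuples over 'I_n
   where the ordinal i stands for preference i+1. *)
Definition B_set (n k : nat) : {set n.-tuple 'I_n} :=
  [set alpha : n.-tuple 'I_n | contained n k [seq ((val i).+1)%:Z | i <- alpha]].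

(* Main.v *)
Require Import Defs.
From HB Require Import structures.
From mathcomp Require Import all_boot all_order all_algebra zify.
Set Implicit Arguments. Unset Strict Implicit. Unset Printing Implicit Defensive.
Import Order.TTheory GRing.Theory Num.Theory.
Local Open Scope ring_scope.

Definition inr (n : nat) (b : int) : bool := (0 < b) && (b <= n%:Z).

Definition phi (m : nat) (z : int) : 'Z_(m.+2) := z%:~R.

Definition cback (m k : nat) (T : seq 'Z_(m.+2)) (a : 'Z_(m.+2)) : option 'Z_(m.+2) :=
  let js := iota 1 k in
  let i := find (fun j : nat => (a - j%:R) \notin T) js in
  if (i < k)%N then Some (a - (nth 0%N js i)%:R) else None.

Fixpoint cfirst (m : nat) (T : seq 'Z_(m.+2)) (fuel : nat) (b : 'Z_(m.+2)) : 'Z_(m.+2) :=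
  match fuel with
  | 0%N => b
  | f.+1 => if b \in T then cfirst T f (b + 1) else b
  end.

Definition cnext (m : nat) (T : seq 'Z_(m.+2)) (a : 'Z_(m.+2)) := cfirst T (size T).+1 (a + 1).

Definition cspot (m k : nat) (T : seq 'Z_(m.+2)) (a : 'Z_(m.+2)) : 'Z_(m.+2) :=
  if a \notin T then a else
  match cback k T a with
  | Some b => b
  | None => cnext T a
  end.

Fixpoint cpark (m k : nat) (T : seq 'Z_(m.+2)) (p : seq 'Z_(m.+2)) : seq 'Z_(m.+2) :=
  match p with
  | [::] => [::]
  | a :: p' => let b := cspot k T a in b :: cpark k (b :: T) p'
  end.

Lemma valZ (m n : nat) : val (n%:R : 'Z_(m.+2)) = (n %% m.+2)%N.
Proof. exact: (@val_Zp_nat m.+2 erefl n). Qed.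

Lemma phi_inj (m : nat) (x y : int) :
  0 < x <= m.+1%:Z -> 0 <= y <= m.+2%:Z -> phi m x = phi m y -> x = y.
Proof.
case: x => [x|x]; last lia. case: y => [y|y]; last lia.
move=> Hx Hy /(congr1 val); rewrite /phi /= !valZ.
have Hx' : (0 < x < m.+2)%N by lia.
rewrite (modn_small (m:=x)); last lia.
have [Hlt|Hge] := ltnP y m.+2.
  by rewrite modn_small // => ->.
have -> : y = m.+2 by lia.
rewrite modnn; lia.
Qed.

Lemma phi0 m : phi m 0 = 0. Proof. by []. Qed.
Lemma phiN m (j : nat) : phi m j%:Z = j%:R. Proof. by []. Qed.
Lemma phiB m (x y : int) : phi m (x - y) = phi m x - phi m y. Proof. by rewrite /phi intrB. Qed.
Lemma phiD m (x y : int) : phi m (x + y) = phi m x + phi m y. Proof. by rewrite /phi intrD. Qed.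

Lemma phi_mem m (S : seq int) (b : int) : all (inr m.+1) S -> 0 <= b <= m.+2%:Z ->
  (phi m b \in map (phi m) S) = (b \in S).
Proof.
move=> HS Hb; apply/mapP/idP; last by move=> H; exists b.
move=> [s Hs Heq]. have := allP HS s Hs; rewrite /inr => Hs'.
have := @phi_inj m s b ltac:(lia) ltac:(lia) (esym Heq).
by move=> <-.
Qed.

Lemma ffree_corr m (S : seq int) f (b : int) : all (inr m.+1) S -> 0 <= b <= m.+2%:Z ->
  phi m (first_free_from S f b) = cfirst (map (phi m) S) f (phi m b) /\
  b <= first_free_from S f b <= m.+2%:Z.
Proof.
move=> HS; elim: f b => [|f IH] b Hb /=; first by split=> //; lia.
rewrite phi_mem //. case Hin: (b \in S); last by split => //; lia.
have := allP HS b Hin; rewrite /inr => Hb'.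
have [H1 H2] := IH (b + 1) ltac:(lia).
split; first by rewrite H1 phiD.
lia.
Qed.

Lemma find_prefix (p : pred nat) (k t : nat) : (t <= k)%N ->
  ((t < k)%N -> has p (iota 1 t)) ->
  find p (iota 1 k) = find p (iota 1 t) /\
  ((find p (iota 1 k) < k)%N -> (find p (iota 1 k) < t)%N).
Proof.
move=> Htk Hhas. have [->|Hlt] := eqVneq t k; first by [].
have Hlt' : (t < k)%N by rewrite ltn_neqAle Hlt.
have Hh := Hhas Hlt'.
rewrite -(subnKC Htk) iotaD find_cat Hh; split => //.
by move: Hh; rewrite has_find size_iota.
Qed.

Lemma back_corr m k (S : seq int) (a : int) : all (inr m.+1) S -> inr m.+1 a ->
  cback k (map (phi m) S) (phi m a) = omap (phi m) (back_free k S a) /\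
  (forall b, back_free k S a = Some b -> 0 <= b <= m.+2%:Z).
Proof.
move=> HS; rewrite /inr => Ha.
case: a Ha => [a|a] Ha; last lia.
set p := (fun j : nat => (Posz a - j%:Z) \notin S).
set q := (fun j : nat => (phi m a - j%:R) \notin map (phi m) S).
have Hpq : forall j : nat, (j <= a)%N -> p j = q j.
  move=> j Hj; rewrite /p /q -(phi_mem (m:=m)) //; last lia.
  by rewrite phiB.
set t := minn k a.
have Htk : (t <= k)%N by rewrite geq_minl.
have Hta : (t <= a)%N by rewrite geq_minr.
have Hhasp : (t < k)%N -> has p (iota 1 t).
  move=> Htk'. have Ht : t = a by rewrite /t; lia.
  apply/hasP; exists a; first by rewrite mem_iota Ht; lia.
  rewrite /p subrr. apply/negP => /(allP HS); rewrite /inr; lia.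
have Hhasq : (t < k)%N -> has q (iota 1 t).
  move=> H; have := Hhasp H; rewrite (@eq_in_has _ p q) // => j.
  rewrite mem_iota => Hj; apply: Hpq; lia.
have [Ep Ip] := find_prefix Htk Hhasp.
have [Eq Iq] := find_prefix Htk Hhasq.
have Epq : find p (iota 1 k) = find q (iota 1 k).
  rewrite Ep Eq; apply: eq_in_find => j; rewrite mem_iota => Hj; apply: Hpq; lia.
rewrite /cback /back_free -/p -/q -Epq.
case: ifP => Hf /=; last by split.
have Hft := Ip Hf.
rewrite nth_iota //; split; first by rewrite phiB.
move=> b [<-]; lia.
Qed.

Lemma spot_corr m k (S : seq int) (a : int) : all (inr m.+1) S -> inr m.+1 a ->
  phi m (park_spot k S a) = cspot k (map (phi m) S) (phi m a) /\
  0 <= park_spot k S a <= m.+2%:Z.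
Proof.
move=> HS Ha. have Ha' := Ha; rewrite /inr in Ha'.
rewrite /park_spot /cspot phi_mem //; last lia.
case: (a \in S) => /=; last by split => //; lia.
have [Hb1 Hb2] := back_corr k HS Ha.
rewrite Hb1; case Hbf: (back_free k S a) => [b|] /=.
  by split => //; apply: Hb2.
rewrite /cnext /next_free size_map.
have -> : phi m a + 1 = phi m (a + 1) by rewrite phiD.
have [H1 H2] := ffree_corr (size S).+1 HS (b := a + 1) ltac:(lia).
split; [by [] | lia].
Qed.

Lemma park_corr m k (p S : seq int) : all (inr m.+1) S -> all (inr m.+1) p ->
  all (inr m.+1) (park_aux k S p) = (0 \notin cpark k (map (phi m) S) (map (phi m) p)).
Proof.
elim: p S => [|a p IH] S HS //= /andP [Ha Hp].
have [Hc Hb] := spot_corr k HS Ha.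
rewrite -Hc in_cons negb_or.
case Hin: (inr m.+1 (park_spot k S a)) => /=.
  have -> : (0 != phi m (park_spot k S a)).
    apply/eqP => H. have := @phi_inj m (park_spot k S a) 0.
    move: Hin; rewrite /inr => Hin.
    rewrite -H => /(_ ltac:(lia) ltac:(lia) (erefl _)); lia.
  by rewrite /= -(IH (park_spot k S a :: S)) //= Hin.
have -> : phi m (park_spot k S a) = 0; last by [].
move: Hin; rewrite /inr.
case: (park_spot k S a) Hb => [b|b] Hb Hin; last lia.
have [->|->] : b = 0%N \/ b = m.+2 by lia.
  by [].
change (phi m (Posz m.+2)) with (m.+2%:R : 'Z_(m.+2)). by apply: val_inj; rewrite valZ modnn.
Qed.

Lemma mem_sh m (T : seq 'Z_(m.+2)) x r : (x + r \in map (fun y => y + r) T) = (x \in T).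
Proof. by apply: (@mem_map _ _ (fun y => y + r)); exact: addIr. Qed.

Lemma cfirst_sh m (T : seq 'Z_(m.+2)) f b r :
  cfirst (map (fun y => y + r) T) f (b + r) = cfirst T f b + r.
Proof.
elim: f b => [|f IH] b //=. rewrite mem_sh; case: ifP => // _.
by rewrite -IH addrAC.
Qed.

Lemma cspot_sh m k (T : seq 'Z_(m.+2)) a r :
  cspot k (map (fun y => y + r) T) (a + r) = cspot k T a + r.
Proof.
rewrite /cspot mem_sh; case: ifP => // _.
rewrite /cback /cnext size_map.
have E : forall j : nat, ((a + r - j%:R) \notin map (fun y => y + r) T) = ((a - j%:R) \notin T).
  by move=> j; rewrite addrAC mem_sh.
rewrite (eq_find E); case: ifP => _; first by rewrite addrAC.
by rewrite addrAC cfirst_sh.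
Qed.

Lemma cpark_sh m k (T p : seq 'Z_(m.+2)) r :
  cpark k (map (fun y => y + r) T) (map (fun y => y + r) p) =
  map (fun y => y + r) (cpark k T p).
Proof.
elim: p T => [|a p IH] T //=. rewrite cspot_sh. congr (_ :: _).
by rewrite -IH.
Qed.

Lemma cfirst_in m (T : seq 'Z_(m.+2)) f b : cfirst T f b \in T ->
  forall i : nat, (i < f)%N -> b + i%:R \in T.
Proof.
elim: f b => [|f IH] b //= H i Hi. case: ifP H => Hb H; last by rewrite Hb in H.
case: i Hi => [|i] Hi; first by rewrite addr0.
by rewrite mulrS addrA; apply: IH.
Qed.

Lemma cfirst_notin m (T : seq 'Z_(m.+2)) b : (size T < m.+2)%N ->
  cfirst T (size T).+1 b \notin T.
Proof.
move=> Hs; apply/negP => /cfirst_in H.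
have Hu : uniq (map (fun i : nat => b + i%:R) (iota 0 (size T).+1)).
  rewrite map_inj_in_uniq ?iota_uniq // => i j; rewrite !mem_iota => Hi Hj /addrI.
  move/(congr1 val); rewrite !valZ !modn_small //; lia.
have Hsub : {subset map (fun i : nat => b + i%:R) (iota 0 (size T).+1) <= T}.
  move=> x /mapP [i]; rewrite mem_iota => Hi ->; apply: H; lia.
have := uniq_leq_size Hu Hsub.
rewrite size_map size_iota. by rewrite ltnn.
Qed.

Lemma cspot_notin m k (T : seq 'Z_(m.+2)) a : (size T < m.+2)%N -> cspot k T a \notin T.
Proof.
move=> Hs; rewrite /cspot; case: ifP => // Ha.
rewrite /cback; case: ifP => Hf.
  have Hh : has (fun j : nat => (a - j%:R) \notin T) (iota 1 k) by rewrite has_find size_iota.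
  exact: (nth_find 0%N Hh).
exact: cfirst_notin.
Qed.

Lemma size_cpark m k (T p : seq 'Z_(m.+2)) : size (cpark k T p) = size p.
Proof. by elim: p T => [|a p IH] T //=; rewrite IH. Qed.

Lemma cpark_uniq m k (p T : seq 'Z_(m.+2)) : (size T + size p <= m.+2)%N ->
  uniq (cpark k T p) && all (fun x => x \notin T) (cpark k T p).
Proof.
elim: p T => [|a p IH] T //= Hs.
have Hb := @cspot_notin m k T a ltac:(lia).
have /andP [Hu Ha] := IH (cspot k T a :: T) ltac:(rewrite /=; lia).
rewrite Hu Hb /= andbT.
apply/andP; split.
  apply/negP => Hin; have := allP Ha _ Hin; by rewrite in_cons eqxx.
apply/allP => x Hx; have := allP Ha _ Hx; by rewrite in_cons negb_or => /andP [].
Qed.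

Lemma cpark_in m k (p T : seq 'Z_(m.+2)) x : x \in p -> (x \in T) || (x \in cpark k T p).
Proof.
elim: p T => [|a p IH] T //=. rewrite in_cons => /orP [/eqP ->|Hx].
  rewrite /cspot; case: ifP => Ha; first by rewrite in_cons eqxx orbT.
  by move/negbFE: Ha => ->.
have := IH (cspot k T a :: T) Hx. rewrite !in_cons.
by case/orP => [/orP [->|->]|->]; rewrite ?orbT.
Qed.

Definition E m k (r : 'Z_(m.+2)) : {set m.+1.-tuple 'Z_(m.+2)} :=
  [set b : m.+1.-tuple 'Z_(m.+2) | r \notin cpark k [::] b].
Arguments E : clear implicits.

Lemma E_card m k r : #|E m k r| = #|E m k 0|.
Proof.
pose f := fun b : m.+1.-tuple 'Z_(m.+2) => map_tuple (fun y => y + r) b.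
have finj : injective f.
  move=> x y /(congr1 val) /= /(inj_map (addIr r)); exact: val_inj.
have -> : E m k 0 = f @^-1: E m k r.
  apply/setP => b; rewrite !inE /=.
  have -> : [::] = map (fun y => y + r) [::] by [].
  rewrite cpark_sh. have := mem_sh (cpark k [::] b) 0 r. by rewrite add0r => ->.
by rewrite card_preimset.
Qed.

Lemma card_notin m k (b : m.+1.-tuple 'Z_(m.+2)) :
  #|[pred r | r \notin cpark k [::] b]| = 1%N.
Proof.
have /andP [Hu _] := @cpark_uniq m k b [::] ltac:(rewrite size_tuple /=; lia).
have := cardC (mem (cpark k [::] b)).
rewrite card_ord (card_uniqP Hu) size_cpark size_tuple /=.
set X := #|_| => H.
move: H; rewrite [Zp_trunc _]/Zp_trunc /=. lia.
Qed.

Lemma E_sum m k : (\sum_(r : 'Z_(m.+2)) #|E m k r|)%N = (m.+2 ^ m.+1)%N.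
Proof.
transitivity (\sum_(r : 'Z_(m.+2)) \sum_(b : m.+1.-tuple 'Z_(m.+2))
                 (if r \notin cpark k [::] b then 1 else 0))%N.
  apply: eq_bigr => r _; rewrite -sum1_card big_mkcond /=.
  by apply: eq_bigr => b _; rewrite inE.
rewrite exchange_big /=.
transitivity (\sum_(b : m.+1.-tuple 'Z_(m.+2)) 1)%N.
  apply: eq_bigr => b _. rewrite -big_mkcond /= sum1_card.
  exact: card_notin.
by rewrite sum1_card card_tuple card_ord.
Qed.

Lemma E0_card m k : #|E m k 0| = (m.+2 ^ m)%N.
Proof.
have := E_sum m k.
rewrite (eq_bigr (fun _ => #|E m k 0|)); last by move=> r _; apply: E_card.
rewrite sum_nat_const card_ord expnS => /eqP; rewrite eqn_mul2l /= => /eqP.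
done.
Qed.

Lemma contained_corr m k (a : seq 'I_m.+1) :
  contained m.+1 k [seq ((val i).+1)%:Z | i <- a] =
  (0 \notin cpark k [::] [seq ((val i).+1)%:R : 'Z_(m.+2) | i <- a]).
Proof.
rewrite /contained /parking.
have := @park_corr m k [seq ((val i).+1)%:Z | i <- a] [::] erefl.
rewrite /inr -map_comp => ->; first by [].
apply/allP => x /mapP [[j Hj] _ ->] /=; lia.
Qed.

Lemma B_card m k : #|B_set m.+1 k| = #|E m k 0|.
Proof.
pose g := fun a : m.+1.-tuple 'I_m.+1 =>
  map_tuple (fun i : 'I_m.+1 => ((val i).+1)%:R : 'Z_(m.+2)) a.
have ginj : injective g.
  move=> x y /(congr1 val) /=; move/inj_map => H; apply: val_inj; apply: H.
  move=> [i Hi] [j Hj] /(congr1 val); rewrite !valZ /= !modn_small; [|lia|lia].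
  by move=> [] E; apply: val_inj => /=.
rewrite -(card_imset _ ginj); suff -> : [set g x | x in B_set m.+1 k] = E m k 0 by [].
apply/setP => c; apply/imsetP/idP.
  move=> [a]; rewrite !inE contained_corr => H ->; exact: H.
rewrite inE => Hc.
have Hnz : forall x, x \in c -> x != 0.
  move=> x Hx; apply/eqP => Ex; rewrite -Ex in Hc.
  by have := @cpark_in m k c [::] x Hx; rewrite (negbTE Hc).
pose a := map_tuple (fun x : 'Z_(m.+2) => (inord (val x).-1 : 'I_m.+1)) c.
have Ega : g a = c.
  apply: val_inj => /=; rewrite -map_comp; apply: map_id_in => -[x Hxl] Hx /=.
  have Hx0 := Hnz _ Hx.
  have Hxl' : (x < m.+2)%N by have := Hxl; rewrite [Zp_trunc _]/Zp_trunc.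
  have Hx0' : (0 < x)%N.
    rewrite lt0n; apply: contra Hx0 => /eqP Ex; apply/eqP; apply: val_inj; by rewrite /= Ex.
  rewrite inordK; last by lia.
  by rewrite prednK //; apply: val_inj; rewrite valZ /= modn_small.
exists a; last by rewrite Ega.
by rewrite inE contained_corr -[map _ _]/(val (g a)) Ega.
Qed.

Theorem lemma3p3 (n k : nat) (hk : (k <= n)%N) :
  #|B_set n k| = (n.+1 ^ n.-1)%N.
Proof.
case: n hk => [|m] hk.
  have -> : B_set 0 k = setT.
    apply/setP => a; rewrite !inE. case: a => [[|x s] Hs] //.
  by rewrite cardsT card_tuple.
by rewrite B_card E0_card.
Qed.
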